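(* Let $\Omega\subseteq\mathbb{R}^2$ be a bounded, simply connected domain of class $C^1$, let $a_1,\ldots,a_p$ be distinct points in $\Omega$, and let $\{L_1,\ldots,L_q\}$ be a minimal connection for $\{a_1,\ldots,a_p\}$ relative to $\Omega$. If some $L_j$ has an endpoint $b_j\in\partial\Omega$, then $L_j$ is orthogonal to $\partial\Omega$ at $b_j$.
   Context: A connection for $\{a_1,\ldots,a_p\}$ relative to $\Omega$ is a finite collection $\{L_1,\ldots,L_q\}$ of closed non-degenerate straight line segments such that (i) each $L_j\subseteq\overline\Omega$; (ii) each $L_j$ either connects two of $a_1,\ldots,a_p$ or connects some $a_i$ with a point of $\partial\Omega$; (iii) each $a_i$ is an endpoint of an odd number of the $L_j$. A minimal connection relative to $\Omega$ is one minimising $\sum_j\mathcal{H}^1(L_j)$ among all connections relative to $\Omega$. *)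

(* Defs.v *)
From HB Require Import structures.
From mathcomp Require Import all_boot all_order all_algebra.
From mathcomp Require Import all_classical all_reals all_analysis.
Set Implicit Arguments. Unset Strict Implicit. Unset Printing Implicit Defensive.
Import Order.TTheory GRing.Theory Num.Theory numFieldNormedType.Exports.
Local Open Scope classical_set_scope.
Local Open Scope ring_scope.

Section Plane.
Variable R : realType.
Notation P := (R * R)%type.

Definition dot (u v : P) : R := u.1 * v.1 + u.2 * v.2.
Definition vsub (u v : P) : P := (u.1 - v.1, u.2 - v.2).
(* Euclidean length |u - v| = H^1 of the segment [u, v] *)
Definition edist (u v : P) : R := Num.sqrt (dot (vsub u v) (vsub u v)).
Definition segpt (u v : P) (t : R) : P :=
  ((1 - t) * u.1 + t * v.1, (1 - t) * u.2 + t * v.2).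

Definition bdry (O : set P) : set P := closure O `\` interior O.

Definition bounded_set (O : set P) : Prop :=
  exists M : R, forall x, O x -> `|x.1| <= M /\ `|x.2| <= M.

Definition simply_connected (O : set P) : Prop :=
  forall gam : R -> P,
    {within `[0, 1], continuous gam} ->
    (forall t, 0 <= t <= 1 -> O (gam t)) ->
    gam 0 = gam 1 ->
    exists H : P -> P,
      {within `[0, 1] `*` `[0, 1], continuous H} /\
      (forall s t, 0 <= s <= 1 -> 0 <= t <= 1 -> O (H (s, t))) /\
      (forall t, 0 <= t <= 1 -> H (0, t) = gam t) /\
      (forall t, 0 <= t <= 1 -> H (1, t) = H (1, 0)) /\
      (forall s, 0 <= s <= 1 -> H (s, 0) = H (s, 1)).

Definition C1fun (g : R -> R) : Prop :=
  (forall x, derivable g x 1) /\ continuous (derive1 g).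

(* A C^1 chart of the boundary at b: in the orthonormal frame
   tau = (c, s), nu = (-s, c) centered at b, inside the box
   |x| < r, |y| < h, the domain O is exactly the subgraph {y < g x}. *)
Definition C1_chart (O : set P) (b : P) (c s r h : R) (g : R -> R) : Prop :=
  c ^+ 2 + s ^+ 2 = 1 /\ 0 < r /\ 0 < h /\ C1fun g /\ g 0 = 0 /\
  (forall x, `|x| < r -> `|g x| < h) /\
  (forall q : P,
     let x := dot (vsub q b) (c, s) in
     let y := dot (vsub q b) (- s, c) in
     `|x| < r -> `|y| < h -> (O q <-> y < g x)).

Definition C1_domain (O : set P) : Prop :=
  open O /\ connected O /\ O !=set0 /\ bounded_set O /\
  forall b, bdry O b -> exists c s r h g, C1_chart O b c s r h g.

(* tangent vector of the boundary at b, read in a chart *)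
Definition chart_tangent (c s : R) (g : R -> R) : P :=
  (c + derive1 g 0 * (- s), s + derive1 g 0 * c).

Definition orthogonal_to_bdry (O : set P) (b d : P) : Prop :=
  forall c s r h g, C1_chart O b c s r h g -> dot d (chart_tangent c s g) = 0.

(* A segment is represented by its pair of endpoints (u, v). *)
Definition same_segment (L1 L2 : P * P) : Prop :=
  L1 = L2 \/ L1 = (L2.2, L2.1).

Definition is_connection (O : set P) (a : seq P) (L : seq (P * P)) : Prop :=
  (* distinct segments (a collection, i.e. a set, of segments) *)
  (forall i j, (i < size L)%N -> (j < size L)%N -> i <> j ->
     ~ same_segment (nth (0, 0) L i) (nth (0, 0) L j)) /\
  (forall l, l \in L -> l.1 <> l.2) /\
  (forall l, l \in L -> forall t, 0 <= t <= 1 -> closure O (segpt l.1 l.2 t)) /\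
  (forall l, l \in L ->
     (l.1 \in a /\ l.2 \in a) \/
     (l.1 \in a /\ bdry O l.2) \/
     (l.2 \in a /\ bdry O l.1)) /\
  (forall ai, ai \in a -> odd (count (fun l => (l.1 == ai) || (l.2 == ai)) L)).

Definition total_length (L : seq (P * P)) : R :=
  \sum_(l <- L) edist l.1 l.2.

Definition minimal_connection (O : set P) (a : seq P) (L : seq (P * P)) : Prop :=
  is_connection O a L /\
  forall L', is_connection O a L' -> total_length L <= total_length L'.

End Plane.

(* Main.v *)
Require Import Defs.
From HB Require Import structures.
From mathcomp Require Import all_boot all_order all_algebra.
From mathcomp Require Import all_classical all_reals all_analysis.
From mathcomp Require Import ring lra.
Import Defs.
Import Order.TTheory GRing.Theory Num.Theory numFieldNormedType.Exports.
Local Open Scope classical_set_scope.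
Local Open Scope ring_scope.

Set Implicit Arguments. Unset Strict Implicit.
Section S.
Variable R : realType.
Notation P := (R * R)%type.

Lemma nbhsP2 (p : P) (B : set P) : nbhs p B <->
  exists2 e : R, 0 < e & forall q : P, `|p.1 - q.1| < e -> `|p.2 - q.2| < e -> B q.
Proof.
split.
- move=> /nbhs_ballP [e e0 H]; exists e => // q h1 h2; apply: H.
  by split; rewrite /= -ball_normE /ball_ /=.
- move=> [e e0 H]; apply/nbhs_ballP; exists e => // q [h1 h2].
  by apply: H; rewrite -ball_normE in h1, h2.
Qed.

Lemma nbhsP1 (t : R) (B : set R) : nbhs t B <->
  exists2 e : R, 0 < e & forall u : R, `|t - u| < e -> B u.
Proof.
split.
- move=> /nbhs_ballP [e e0 H]; exists e => // q h1; apply: H.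
- move=> [e e0 H]; apply/nbhs_ballP; exists e => // q h1.
Qed.

Lemma bdry_notO (O : set P) q : open O -> bdry O q -> ~ O q.
Proof. by move=> oO [_ ni] Oq; apply: ni; rewrite openE in oO; apply: oO. Qed.

Lemma bdry_of (O : set P) q : closure O q -> ~ O q -> bdry O q.
Proof. by move=> cq nq; split => // /interior_subset. Qed.

Definition cpt (y : P) (c s X Y : R) : P := (y.1 + X * c - Y * s, y.2 + X * s + Y * c).

Lemma cpt_coords y c s X Y : c ^+ 2 + s ^+ 2 = 1 ->
  dot (vsub (cpt y c s X Y) y) (c, s) = X /\ dot (vsub (cpt y c s X Y) y) (- s, c) = Y.
Proof.
move=> cs; rewrite /dot /vsub /cpt /=; split.
- by transitivity (X * (c ^+ 2 + s ^+ 2)); [ring | rewrite cs mulr1].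
- by transitivity (Y * (c ^+ 2 + s ^+ 2)); [ring | rewrite cs mulr1].
Qed.

Lemma chart_cpt O y c s r h g X Y : C1_chart O y c s r h g ->
  `|X| < r -> `|Y| < h -> (O (cpt y c s X Y) <-> Y < g X).
Proof.
move=> [cs [_ [_ [_ [_ [_ H]]]]]] hX hY.
have [e1 e2] := @cpt_coords y c s X Y cs.
by have := H (cpt y c s X Y); rewrite /= e1 e2; apply.
Qed.

Lemma phi_bdry O y c s r h g t : C1_chart O y c s r h g ->
  `|t| < r -> bdry O (cpt y c s t (g t)).
Proof.
move=> ch ht; have ch' := ch.
move: ch' => [cs [r0 [h0 [_ [_ [gb _]]]]]].
have hg := gb t ht.
apply: bdry_of; last first.
  by move/(chart_cpt ch ht hg); rewrite ltxx.
move=> B /nbhsP2 [e e0 HB].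
have s1 : `|s| <= 1.
  rewrite -ler_sqr ?nnegrE // expr1n real_normK ?num_real //; nra.
have c1 : `|c| <= 1.
  rewrite -ler_sqr ?nnegrE // expr1n real_normK ?num_real //; nra.
have hgt : - h < g t < h by rewrite -ltr_norml.
move: hgt => /andP [hg1 hg2].
pose ep := Num.min (e / 2) ((h + g t) / 2).
have ep0 : 0 < ep by rewrite lt_min; apply/andP; split; lra.
have ep1 : ep <= e / 2 by rewrite ge_min lexx.
have ep2 : ep <= (h + g t) / 2 by rewrite ge_min lexx orbT.
exists (cpt y c s t (g t - ep)); split.
- apply/(chart_cpt ch ht); last lra.
  rewrite ltr_norml; apply/andP; split; lra.
- apply: HB; rewrite /cpt /=.
  + have -> : y.1 + t * c - g t * s - (y.1 + t * c - (g t - ep) * s) = - (ep * s) by ring.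
    rewrite normrN normrM gtr0_norm //; nra.
  + have -> : y.2 + t * s + g t * c - (y.2 + t * s + (g t - ep) * c) = ep * c by ring.
    rewrite normrM gtr0_norm //; nra.
Qed.

Definition sq (u v : P) : R := dot (vsub u v) (vsub u v).

Lemma segpt_cont (a q : P) (t e : R) : 0 < e -> exists2 d : R, 0 < d &
  forall u, `|t - u| < d -> `|(segpt a q t).1 - (segpt a q u).1| < e /\ `|(segpt a q t).2 - (segpt a q u).2| < e.
Proof.
move=> e0; pose K := `|q.1 - a.1| + `|q.2 - a.2| + 1.
have K0 : 0 < K by rewrite /K; have := normr_ge0 (q.1 - a.1); have := normr_ge0 (q.2 - a.2); lra.
exists (e / K); first by apply: divr_gt0.
have dK : e / K * K = e by field; lra.
move=> u hu; have := normr_ge0 (t - u) => hu0.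
have A1 : `|q.1 - a.1| <= K by rewrite /K; have := normr_ge0 (q.2 - a.2); lra.
have A2 : `|q.2 - a.2| <= K by rewrite /K; have := normr_ge0 (q.1 - a.1); lra.
rewrite /segpt /=; split.
- have -> : (1 - t) * a.1 + t * q.1 - ((1 - u) * a.1 + u * q.1) = (t - u) * (q.1 - a.1) by ring.
  rewrite normrM; have := normr_ge0 (q.1 - a.1); nra.
- have -> : (1 - t) * a.2 + t * q.2 - ((1 - u) * a.2 + u * q.2) = (t - u) * (q.2 - a.2) by ring.
  rewrite normrM; have := normr_ge0 (q.2 - a.2); nra.
Qed.

Lemma first_exit (O : set P) (a q : P) : open O -> O a -> ~ O q ->
  exists c : P, bdry O c /\ (forall v, 0 <= v <= 1 -> closure O (segpt a c v)) /\ sq a c <= sq a q.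
Proof.
move=> oO Oa nOq.
pose T := [set t : R | 0 <= t <= 1 /\ ~ O (segpt a q t)].
have seg1 : segpt a q 1 = q by rewrite /segpt !subrr !mul0r !add0r !mul1r -surjective_pairing.
have seg0 : segpt a q 0 = a by rewrite /segpt !subr0 !mul0r !addr0 !mul1r -surjective_pairing.
have T1 : T 1 by split; [rewrite ler01 lexx | rewrite seg1].
have Tne : T !=set0 by exists 1.
have Tlb : has_lbound T by exists 0 => t [/andP [] ].
pose ts := inf T.
have ts0 : 0 <= ts by apply: lb_le_inf => // t [/andP []].
have ts1 : ts <= 1 by apply: ge_inf.
have below : forall u, 0 <= u < ts -> O (segpt a q u).
  move=> u /andP [u0 ut]; apply/not_notP => nO.
  have : ts <= u by apply: ge_inf => //; split => //; apply/andP; split => //; lra.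
  lra.
have nOts : ~ O (segpt a q ts).
  move=> Ots; have : nbhs (segpt a q ts) O by rewrite openE in oO; apply: oO.
  move=> /nbhsP2 [e e0 He].
  have [d d0 Hd] := segpt_cont a q ts e0.
  have [u Tu ud] : exists2 u, T u & u < ts + d by apply: inf_lt => //; lra.
  have tu : ts <= u by apply: ge_inf.
  have [h1 h2] := Hd u (ltac:(rewrite distrC ger0_norm; lra)).
  by case: Tu => _; apply; apply: He.
have tsp : 0 < ts.
  rewrite lt_neqAle ts0 andbT; apply/eqP => ts0'.
  by apply: nOts; rewrite -ts0' seg0.
have clts : closure O (segpt a q ts).
  move=> B /nbhsP2 [e e0 HB].
  have [d d0 Hd] := segpt_cont a q ts e0.
  pose m := Num.min ts d.
  have m0 : 0 < m by rewrite lt_min tsp d0.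
  have m1 : m <= ts by rewrite ge_min lexx.
  have m2 : m <= d by rewrite ge_min lexx orbT.
  exists (segpt a q (ts - m / 2)); split.
  - apply: below; apply/andP; split; lra.
  - have [h1 h2] := Hd (ts - m / 2) (ltac:(rewrite ger0_norm; lra)).
    exact: HB.
exists (segpt a q ts); split; first exact: bdry_of.
split.
- move=> v /andP [v0 v1].
  have -> : segpt a (segpt a q ts) v = segpt a q (v * ts).
    by rewrite /segpt /=; congr pair; ring.
  have [v1'|->] : v < 1 \/ v = 1 by lra.
  + apply: subset_closure; apply: below; apply/andP; split; nra.
  + by rewrite mul1r.
- rewrite /sq /dot /vsub /segpt /=.
  have D0 : 0 <= (a.1 - q.1) * (a.1 - q.1) + (a.2 - q.2) * (a.2 - q.2).
    by apply: addr_ge0; rewrite -expr2 sqr_ge0.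
  apply: (@le_trans _ _ (ts ^+ 2 * ((a.1 - q.1) * (a.1 - q.1) + (a.2 - q.2) * (a.2 - q.2)))).
  + rewrite le_eqVlt; apply/orP; left; apply/eqP; ring.
  + have : ts ^+ 2 <= 1 by rewrite expr2; nra.
    nra.
Qed.

Definition sseg (u v : P * P) : bool := (u == v) || (u == (v.2, v.1)).

Lemma ssegP u v : reflect (same_segment u v) (sseg u v).
Proof. by apply: (iffP orP); case => [/eqP|/eqP] ->; [left|right|left|right]. Qed.

Lemma sseg_sym u v : sseg u v = sseg v u.
Proof.
case: u => u1 u2; case: v => v1 v2; rewrite /sseg /= !xpair_eqE.
by apply/idP/idP => /orP [] /andP [/eqP -> /eqP ->]; rewrite !eqxx ?orbT.
Qed.

Lemma dist_pw (L : seq (P * P)) :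
  (forall i j, (i < size L)%N -> (j < size L)%N -> i <> j ->
     ~ same_segment (nth (0, 0) L i) (nth (0, 0) L j)) <->
  pairwise (fun u v => ~~ sseg u v) L.
Proof.
split.
- move=> H; apply/(pairwiseP (0, 0)) => i j hi hj ij; apply/negP => /ssegP.
  by apply: H => //; move=> e; rewrite e ltnn in ij.
- move=> /(pairwiseP (0, 0)) H i j hi hj ij /ssegP S.
  case: (ltngtP i j) => [lt|gt|eq]; last by [].
  + by move: (H i j hi hj lt); rewrite S.
  + by move: (H j i hj hi gt); rewrite sseg_sym S.
Qed.

Lemma edistC (u v : P) : edist u v = edist v u.
Proof. by rewrite /edist /dot /vsub /=; congr Num.sqrt; ring. Qed.

Lemma edist_ge0 (u v : P) : 0 <= edist u v.
Proof. exact: sqrtr_ge0. Qed.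

Lemma total_cons (l : P * P) (L : seq (P * P)) : total_length (l :: L) = edist l.1 l.2 + total_length L.
Proof. by rewrite /total_length big_cons. Qed.

Lemma total_perm (L1 L2 : seq (P * P)) : perm_eq L1 L2 -> total_length L1 = total_length L2.
Proof. by move=> pe; rewrite /total_length (perm_big _ pe). Qed.

Lemma nearest (O : set P) (a : seq P) (L : seq (P * P)) (l : P * P) (x y : P) :
  open O -> (forall ai, ai \in a -> O ai) -> minimal_connection O a L -> l \in L ->
  x \in a -> bdry O y -> (l = (x, y) \/ l = (y, x)) ->
  forall q, bdry O q -> edist x y <= edist x q.
Proof.
move=> oO aO [[dist [nd [clo [ii iii]]]] minL] lL xa by_ lxy q bq.
have Ox := aO x xa.
have [c [bc [clc sqc]]] := first_exit oO Ox (bdry_notO oO bq).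
have nOc := bdry_notO oO bc.
have nOy := bdry_notO oO by_.
suff : edist x y <= edist x c.
  by move=> h; apply: (le_trans h); apply: ler_wsqrtr.
have pw := (dist_pw L).1 dist.
pose L0 := rem l L.
have pL : perm_eq L (l :: L0) by apply: perm_to_rem.
have L0L : {subset L0 <= L} by apply: mem_rem.
have el : edist l.1 l.2 = edist x y by case: lxy => ->; rewrite // edistC.
have cntl : forall ai, ai \in a -> ((l.1 == ai) || (l.2 == ai)) = (x == ai).
  move=> ai aia; have Oai := aO ai aia.
  have yai : (y == ai) = false by apply/negP => /eqP e; apply: nOy; rewrite e.
  by case: lxy => -> /=; rewrite yai ?orbF.
have cL : forall ai, count (fun l => (l.1 == ai) || (l.2 == ai)) L =
    (nat_of_bool ((l.1 == ai) || (l.2 == ai)) + count (fun l => (l.1 == ai) || (l.2 == ai)) L0)%N.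
  by move=> ai; rewrite (permP pL).
pose n := (x, c).
have cntn : forall ai, ai \in a -> ((n.1 == ai) || (n.2 == ai)) = (x == ai).
  move=> ai aia; have Oai := aO ai aia.
  have cai : (c == ai) = false by apply/negP => /eqP e; apply: nOc; rewrite e.
  by rewrite /= cai orbF.
have xc : x <> c by move=> e; apply: nOc; rewrite -e.
have tL : total_length L = edist x y + total_length L0.
  by rewrite (total_perm pL) total_cons el.
case E: (has (sseg n) L0).
- move/hasP: E => [l' l'L0 nl'].
  pose L' := rem l' L0.
  have pL0 : perm_eq L0 (l' :: L') by apply: perm_to_rem.
  have L'L : {subset L' <= L} by move=> z /mem_rem /L0L.
  have conn : is_connection O a L'.
    split; last split; last split; last split.
    + apply/dist_pw; apply: (subseq_pairwise (rem_subseq _ _)).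
      exact: (subseq_pairwise (rem_subseq _ _)).
    + by move=> z /L'L; apply: nd.
    + by move=> z /L'L; apply: clo.
    + by move=> z /L'L; apply: ii.
    + move=> ai aia; have := iii ai aia; rewrite cL (permP pL0) /= cntl //.
      have -> : ((l'.1 == ai) || (l'.2 == ai)) = (x == ai).
        rewrite -(cntn ai aia); move/ssegP: nl' => [-> //|->] /=.
        by rewrite orbC.
      by case: (x == ai); rewrite /= ?addnA ?addn1 ?addn0 //= negbK.
  have := minL L' conn; rewrite tL (total_perm pL0) total_cons.
  have := edist_ge0 l'.1 l'.2; have := edist_ge0 x c; lra.
- pose L' := n :: L0.
  have conn : is_connection O a L'.
    split; last split; last split; last split.
    + apply/dist_pw; rewrite /L' pairwise_cons; apply/andP; split.
      * by apply/allP => z zL0; move/negbT/hasPn: E => /(_ z zL0).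
      * exact: (subseq_pairwise (rem_subseq _ _)).
    + move=> z; rewrite in_cons => /orP [/eqP -> |/L0L]; last exact: nd.
      exact: xc.
    + move=> z; rewrite in_cons => /orP [/eqP -> |/L0L]; last exact: clo.
      by move=> t ht; apply: clc.
    + move=> z; rewrite in_cons => /orP [/eqP -> |/L0L]; last exact: ii.
      by right; left.
    + move=> ai aia; have := iii ai aia; rewrite cL /L' /= cntl // cntn //.
  have := minL L' conn; rewrite tL /L' total_cons /=; lra.
Qed.
Lemma perp_of_min (x y : P) (c s r : R) (g : R -> R) :
  C1fun g -> g 0 = 0 -> 0 < r ->
  (forall t, - r < t < r -> sq x y <= sq x (cpt y c s t (g t))) ->
  dot (vsub x y) (chart_tangent c s g) = 0.
Proof.
move=> [gd _] g0 r0 Hmin.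
pose u1 : R -> R := cst (x.1 - y.1) - c *: id + s *: g.
pose u2 : R -> R := cst (x.2 - y.2) - s *: id - c *: g.
have Fe : forall t, sq x (cpt y c s t (g t)) = (u1 * u1 + u2 * u2) t.
  move=> t; rewrite /sq /cpt /dot /vsub /u1 /u2 /=. rewrite !fctE. rewrite /GRing.scale /=. ring.
have dg : forall t : R, is_derive t (1:R) g ('D_1 g t) by move=> t; apply: derivableP.
have du1 : forall t : R, is_derive t (1:R) u1 (- c + s * 'D_1 g t).
  move=> t.
  have := is_deriveD (is_deriveB (is_derive_cst (x.1 - y.1) t 1) (is_deriveZ c (is_derive_id t 1))) (is_deriveZ s (dg t)).
  move/is_derive_eq; apply; rewrite /GRing.scale /=; ring.
have du2 : forall t : R, is_derive t (1:R) u2 (- s - c * 'D_1 g t).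
  move=> t.
  have := is_deriveB (is_deriveB (is_derive_cst (x.2 - y.2) t 1) (is_deriveZ s (is_derive_id t 1))) (is_deriveZ c (dg t)).
  move/is_derive_eq; apply; rewrite /GRing.scale /=; ring.
have dF := is_deriveD (is_deriveM (du1 0) (du1 0)) (is_deriveM (du2 0) (du2 0)).
have dF0 : is_derive (0:R) 1 (u1 * u1 + u2 * u2) 0.
  apply: (@derive1_at_min _ _ (- r) r).
  - lra.
  - move=> t _; apply: derivableD; apply: derivableM; apply: ex_derive.
  - by rewrite in_itv /=; apply/andP; split; lra.
  - move=> t; rewrite in_itv /= => /andP [t1 t2].
    rewrite -!Fe; have -> : cpt y c s 0 (g 0) = y.
      by rewrite /cpt g0 !mul0r subr0 !addr0 -surjective_pairing.
    apply: Hmin; apply/andP; split => //.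
have := @derive_val _ _ _ _ _ _ _ dF; rewrite (@derive_val _ _ _ _ _ _ _ dF0).
rewrite /chart_tangent /dot /vsub /u1 /u2 !fctE /GRing.scale /= derive1E g0.
move=> H; lra.
Qed.

End S.

Theorem lemma1p5 (R : realType) (O : set (R * R)) (a : seq (R * R))
  (L : seq ((R * R) * (R * R))) :
  C1_domain O -> simply_connected O ->
  uniq a -> (forall ai, ai \in a -> O ai) ->
  minimal_connection O a L ->
  forall l, l \in L ->
    (bdry O l.2 -> orthogonal_to_bdry O l.2 (vsub l.1 l.2)) /\
    (bdry O l.1 -> orthogonal_to_bdry O l.1 (vsub l.2 l.1)).
Proof.
move=> [oO _] _ _ aO hmin l lL.
have hmin' := hmin.
move: hmin' => [[_ [_ [_ [ii _]]]] _].
have key : forall x y, x \in a -> bdry O y -> (l = (x, y) \/ l = (y, x)) ->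
    orthogonal_to_bdry O y (vsub x y).
  move=> x y xa by_ lxy c s r h g ch.
  have ch' := ch; move: ch' => [_ [r0 [_ [C1 [g0 _]]]]].
  apply: (perp_of_min C1 g0 r0) => t /andP [t1 t2].
  have ht : `|t| < r by rewrite ltr_norml t1 t2.
  have bq := phi_bdry ch ht.
  have := nearest oO aO hmin lL xa by_ lxy bq.
  rewrite /edist ler_sqrt //.
  by rewrite /dot; apply: addr_ge0; rewrite -expr2 sqr_ge0.
split => bl.
- apply: key => //; last by left; exact: surjective_pairing.
  case: (ii l lL) => [[_ /aO /(bdry_notO oO bl) //]|[[] //|[/aO /(bdry_notO oO bl) //]]].
- apply: (key l.2 l.1) => //; last by right; exact: surjective_pairing.
  case: (ii l lL) => [[/aO /(bdry_notO oO bl) //]|[[/aO /(bdry_notO oO bl) //]|[] //]].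
Qed.
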